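(* Let $\tilde q=q^2$. For all integers $v\geq 1$ and $L\geq 0$, \[ \sum_{n_1,\ldots,n_v\geq 0} \frac{\tilde q^{\sum_{i=1}^v N_i^2}}{(\tilde q)_{n_1}\cdots(\tilde q)_{n_{v-1}}(\tilde q)_{2n_v}}\cdot\frac{(q^3;q^6)_{n_v}}{(q;q^2)_{n_v}}\cdot\frac{(\tilde q)_{2L}}{(\tilde q)_{L-N_1}} =\sum_{j=-\infty}^{\infty} (-1)^j \left(\frac{j+1}{3}\right) q^{(2v+1)j^2}{2L \brack L+j}_{\tilde q}, \] where $N_i=n_i+n_{i+1}+\cdots+n_v$ for $i=1,\ldots,v$ (for $v=1$ the product $(\tilde q)_{n_1}\cdots(\tilde q)_{n_{v-1}}$ is empty).
   Context: For a variable $a$ and integer $n\ge 0$, $(a;q)_n=(1-a)(1-aq)\cdots(1-aq^{n-1})$, and $(\tilde q)_n=(\tilde q;\tilde q)_n$; by convention $1/(\tilde q)_n=0$ for negative integers $n$. The $q$-binomial coefficient in base $\tilde q$ is ${A \brack B}_{\tilde q}=\frac{(\tilde q;\tilde q)_A}{(\tilde q;\tilde q)_B(\tilde q;\tilde q)_{A-B}}$ if $0\le B\le A$ are integers, and $0$ otherwise. $\left(\frac{j}{3}\right)$ is the Legendre symbol modulo 3: it equals $1$ if $j\equiv 1 \pmod 3$, $-1$ if $j\equiv -1\pmod 3$, and $0$ if $3\mid j$. *)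

(* Defs.v *)
From HB Require Import structures.
From mathcomp Require Import all_boot all_order all_algebra.
Set Implicit Arguments. Unset Strict Implicit. Unset Printing Implicit Defensive.
Import Order.TTheory GRing.Theory Num.Theory.
Local Open Scope ring_scope.

Definition qpoch (F : fieldType) (a t : F) (n : nat) : F :=
  \prod_(i < n) (1 - a * t ^+ i).

Definition tpoch (F : fieldType) (t : F) (n : nat) : F := qpoch t t n.

Definition tpoch_rec (F : fieldType) (t : F) (m : int) : F :=
  if (m < 0)%R then 0 else (tpoch t `|m|%N)^-1.

Definition qbinom (F : fieldType) (t : F) (A B : int) : F :=
  if ((0 <= B) && (B <= A))%R
  then tpoch t `|A|%N / (tpoch t `|B|%N * tpoch t `|A - B|%N)
  else 0.

Definition leg3 (j : int) : int :=
  if (j %% 3)%Z == 1 then 1 else if (j %% 3)%Z == 2 then -1 else 0.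

(* N_i = n_i + ... + n_v ; we index 0-based: n 0, ..., n (v-1) stand for
   n_1, ..., n_v (values of n outside 0..v-1 are irrelevant) *)
Definition Nsum (v : nat) (n : nat -> nat) (i : nat) : nat :=
  (\sum_(k < v | (i <= k)%N) n k)%N.

Definition lhs_term (F : fieldType) (q : F) (v L : nat) (n : nat -> nat) : F :=
  let qt := q ^+ 2 in
  let nv := n v.-1 in
  qt ^+ (\sum_(i < v) (Nsum v n i) ^ 2)%N
  / ((\prod_(i < v | (i < v.-1)%N) tpoch qt (n i)) * tpoch qt (2 * nv)%N)
  * (qpoch (q ^+ 3) (q ^+ 6) nv / qpoch q (q ^+ 2) nv)
  * (tpoch qt (2 * L)%N * tpoch_rec qt (L%:Z - (Nsum v n 0)%:Z)).

Definition rhs_term (F : fieldType) (q : F) (v L : nat) (j : int) : F :=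
  (-1) ^+ `|j|%N * (leg3 (j + 1))%:~R * q ^+ ((2 * v + 1) * `|j|%N ^ 2)%N
  * qbinom (q ^+ 2) (2 * L)%N%:Z (L%:Z + j).

Definition ext_fam (v B : nat) (n : {ffun 'I_v -> 'I_B}) (i : nat) : nat :=
  if insub i is Some k then nat_of_ord (n k) else 0%N.

(* Main.v *)
Require Import Defs.
From HB Require Import structures.
From mathcomp Require Import all_boot all_order all_algebra.
From mathcomp Require Import zify ring.
From Stdlib Require Import FunctionalExtensionality.
Import Order.TTheory GRing.Theory Num.Theory.
Local Open Scope ring_scope.

Section Main.
Variable F : fieldType.
Variable q : F.
Hypothesis hq : forall k : nat, (0 < k)%N -> q ^+ k != 1.

Local Notation p := (q ^+ 2).
Local Notation r := (tpoch_rec (q ^+ 2)).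

Lemma tpochS (t : F) n : tpoch t n.+1 = tpoch t n * (1 - t ^+ n.+1).
Proof. by rewrite /tpoch /qpoch big_ord_recr /= exprS. Qed.

Lemma tpoch0 (t:F) : tpoch t 0 = 1. Proof. by rewrite /tpoch /qpoch big_ord0. Qed.

Lemma q_neq1 n : (0 < n)%N -> 1 - q ^+ n != 0.
Proof. by move=> hn; rewrite subr_eq0 eq_sym; apply: hq. Qed.

Lemma p_neq1 n : (0 < n)%N -> 1 - p ^+ n != 0.
Proof. move=> hn; rewrite -exprM; apply: q_neq1; lia. Qed.

Lemma tpoch_neq0 n : tpoch p n != 0.
Proof.
elim: n => [|n IH]; first by rewrite tpoch0 oner_neq0.
by rewrite tpochS mulf_neq0 // p_neq1.
Qed.

Lemma r_nat (n : nat) : r n%:Z = (tpoch p n)^-1.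
Proof. by rewrite /tpoch_rec. Qed.

Lemma r_neg (m : int) : m < 0 -> r m = 0.
Proof. by rewrite /tpoch_rec => ->. Qed.

Lemma rsh (m : int) : r m = r (m + 1) * (1 - p ^+ `|(m + 1)%R|%N).
Proof.
case: (ltrP m (-1)) => hm.
  by rewrite !r_neg ?mul0r //; lia.
have [n hn] : exists n : nat, m + 1 = n%:Z by exists `|(m+1)%R|%N; lia.
rewrite hn (_ : m = n%:Z - 1); last by rewrite -hn addrK.
case: n hn => [|n] hn.
  by rewrite expr0 subrr mulr0 r_neg.
rewrite (_ : n.+1%:Z - 1 = n%:Z); last by lia.
by rewrite !r_nat tpochS invfM /= divfK // p_neq1.
Qed.

Lemma rshn (n : nat) : r n = r n.+1 * (1 - p ^+ n.+1).
Proof. by rewrite rsh (_ : n%:Z + 1 = n.+1) //; lia. Qed.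

Lemma rm1 (n : nat) : r (n%:Z - 1) = r n * (1 - p ^+ n).
Proof. by rewrite rsh (_ : n%:Z - 1 + 1 = n) ?subrK //; lia. Qed.

Definition G (K : nat) (j : int) : F :=
  q ^+ (`|j| ^ 2)%N * tpoch p (2 * K)%N * r (K%:Z - j) * r (K%:Z + j).

Lemma G_sym K j : G K (- j) = G K j.
Proof. by rewrite /G abszN opprK mulrAC -!mulrA [r _ * r _]mulrC. Qed.

Ltac pw := rewrite -?exprM -?exprD; congr (_ ^+ _); lia.

Lemma three0 K : G K.+1 0 = (1 + q ^+ (4 * K + 2)) * G K 0
   + q ^+ (2 * K + 1) * (G K (0 - 1) + G K (0 + 1)).
Proof.
have e1 : G K.+1 0 = tpoch p (2*K) * (1 - p^+(2*K).+1) * (1 - p^+(2*K).+2) * r K.+1 * r K.+1.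
  rewrite /G ?subr0 ?addr0 /= expr0 mul1r (_ : (2 * K.+1 = (2*K).+2)%N); last by lia.
  by rewrite !tpochS -!mulrA.
have e2 : G K 0 = tpoch p (2*K) * (r K.+1 * (1 - p ^+ K.+1)) * (r K.+1 * (1 - p ^+ K.+1)).
  by rewrite /G ?subr0 ?addr0 /= expr0 mul1r -rshn.
have e3 : G K (0 - 1) = q * tpoch p (2*K) * (r K.+1 * (1 - p ^+ K.+1) * (1 - p ^+ K)) * r K.+1.
  rewrite /G sub0r /= expr1 opprK rm1 (rshn K) (_ : K%:Z + 1 = K.+1); last by lia.
  by ring.
have e4 : G K (0 + 1) = q * tpoch p (2*K) * (r K.+1 * (1 - p ^+ K.+1) * (1 - p ^+ K)) * r K.+1.
  by rewrite add0r -G_sym -e3 sub0r.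
rewrite e1 e2 e3 e4.
have x1 : p ^+ (2*K).+1 = (q ^+ K) ^+ 4 * q ^+ 2 by pw.
have x2 : p ^+ (2*K).+2 = (q ^+ K) ^+ 4 * q ^+ 4 by pw.
have x3 : p ^+ K.+1 = (q ^+ K) ^+ 2 * q ^+ 2 by pw.
have x4 : p ^+ K = (q ^+ K) ^+ 2 by pw.
have x5 : q ^+ (4 * K + 2) = (q ^+ K) ^+ 4 * q ^+ 2 by pw.
have x6 : q ^+ (2 * K + 1) = (q ^+ K) ^+ 2 * q ^+ 1 by pw.
rewrite x1 x2 x3 x4 x5 x6.
ring.
Qed.

Lemma rshn' (n m : nat) : m = n.+1 -> r n = r m * (1 - p ^+ m).
Proof. by move=> ->; apply: rshn. Qed.

Lemma threeIn a n K : K = (a + n.+1)%N ->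
  G K.+1 n.+1 = (1 + q ^+ (4 * K + 2)) * G K n.+1
   + q ^+ (2 * K + 1) * (G K (n.+1%:Z - 1) + G K (n.+1%:Z + 1)).
Proof.
move=> hK.
have e1 : G K.+1 n.+1 = q ^+ (n.+1 ^ 2) * tpoch p (2*K) * (1 - p^+(2*K).+1) * (1 - p^+(2*K).+2)
     * r a.+1 * r (a + 2 * n + 3)%N.
  rewrite /G (_ : (2 * K.+1 = (2*K).+2)%N); last by lia.
  rewrite (_ : K.+1%:Z - n.+1%:Z = a.+1); last by lia.
  rewrite (_ : K.+1%:Z + n.+1%:Z = (a + 2 * n + 3)%N); last by lia.
  by rewrite !tpochS /= -!mulrA.
have e2 : G K n.+1 = q ^+ (n.+1 ^ 2) * tpoch p (2*K) * (r a.+1 * (1 - p ^+ a.+1))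
     * (r (a + 2 * n + 3)%N * (1 - p ^+ (a + 2 * n + 3)%N)).
  rewrite /G (_ : K%:Z - n.+1%:Z = a); last by lia.
  rewrite (_ : K%:Z + n.+1%:Z = (a + 2 * n + 2)%N); last by lia.
  by rewrite (rshn a) (rshn' (a + 2 * n + 2) (a + 2 * n + 3)) //; lia.
have e3 : G K (n.+1%:Z - 1) = q ^+ (n ^ 2) * tpoch p (2*K) * r a.+1
     * (r (a + 2 * n + 3)%N * (1 - p ^+ (a + 2 * n + 3)%N) * (1 - p ^+ (a + 2 * n + 2)%N)).
  rewrite /G (_ : n.+1%:Z - 1 = n); last by lia.
  rewrite (_ : K%:Z - n%:Z = a.+1); last by lia.
  rewrite (_ : K%:Z + n%:Z = (a + 2 * n + 1)%N); last by lia.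
  rewrite (rshn' (a + 2 * n + 1) (a + 2 * n + 2)); last by lia.
  rewrite (rshn' (a + 2 * n + 2) (a + 2 * n + 3)); last by lia.
  by rewrite -!mulrA.
have e4 : G K (n.+1%:Z + 1) = q ^+ (n.+2 ^ 2) * tpoch p (2*K) 
     * (r a.+1 * (1 - p ^+ a.+1) * (1 - p ^+ a)) * r (a + 2 * n + 3)%N.
  rewrite /G (_ : n.+1%:Z + 1 = n.+2); last by lia.
  rewrite (_ : K%:Z - n.+2%:Z = a%:Z - 1); last by lia.
  rewrite (_ : K%:Z + n.+2%:Z = (a + 2 * n + 3)%N); last by lia.
  by rewrite rm1 (rshn a).
rewrite e1 e2 e3 e4.
have x1 : p ^+ (2*K).+1 = (q ^+ a) ^+ 4 * (q ^+ n) ^+ 4 * q ^+ 6 by pw.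
have x2 : p ^+ (2*K).+2 = (q ^+ a) ^+ 4 * (q ^+ n) ^+ 4 * q ^+ 8 by pw.
have x3 : p ^+ a.+1 = (q ^+ a) ^+ 2 * q ^+ 2 by pw.
have x4 : p ^+ a = (q ^+ a) ^+ 2 by pw.
have x5 : q ^+ (4 * K + 2) = (q ^+ a) ^+ 4 * (q ^+ n) ^+ 4 * q ^+ 6 by pw.
have x6 : q ^+ (2 * K + 1) = (q ^+ a) ^+ 2 * (q ^+ n) ^+ 2 * q ^+ 3 by pw.
have x7 : p ^+ (a + 2 * n + 3) = (q ^+ a) ^+ 2 * (q ^+ n) ^+ 4 * q ^+ 6 by pw.
have x8 : p ^+ (a + 2 * n + 2) = (q ^+ a) ^+ 2 * (q ^+ n) ^+ 4 * q ^+ 4 by pw.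
have x9 : q ^+ (n.+1 ^ 2) = q ^+ (n ^ 2) * (q ^+ n) ^+ 2 * q ^+ 1 by pw.
have x10 : q ^+ (n.+2 ^ 2) = q ^+ (n ^ 2) * (q ^+ n) ^+ 4 * q ^+ 4 by pw.
rewrite x1 x2 x3 x4 x5 x6 x7 x8 x9 x10.
generalize (tpoch p (2*K)) (r a.+1) (r (a+2*n+3)%N) (q^+(n^2)) (q^+a) (q^+n) => T R1 R2 Z X Y.
clear.
ring.
Qed.

Lemma G0 K j : (K < `|j|)%N -> G K j = 0.
Proof.
move=> h; rewrite /G.
case: (ltrP j 0) => hj.
  by rewrite [r (K%:Z + j)]r_neg ?mulr0 //; lia.
by rewrite [r (K%:Z - j)]r_neg ?mulr0 ?mul0r //; lia.
Qed.

Lemma G_diag K : G K K = q ^+ (K ^ 2).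
Proof.
rewrite /G subrr (_ : K%:Z + K%:Z = (2 * K)%N); last by lia.
by rewrite !r_nat tpoch0 invr1 mulr1 /= mulfK // tpoch_neq0.
Qed.

Lemma threepos K (m : nat) : G K.+1 m = (1 + q ^+ (4 * K + 2)) * G K m
   + q ^+ (2 * K + 1) * (G K (m%:Z - 1) + G K (m%:Z + 1)).
Proof.
case: m => [|n]; first exact: three0.
case: (ltnP n K) => h1.
  by apply: (threeIn (K - n.+1)%N n K); lia.
case: (ltnP K n) => h2.
  rewrite !G0 ?mulr0 ?addr0 ?mulr0 ?addr0 //; lia.
have -> : n = K by lia.
rewrite G_diag (G0 K K.+1) ?mulr0 ?add0r; last by lia.
rewrite (_ : K.+1%:Z - 1 = K); last by lia.
rewrite G_diag (G0 K (K.+1%:Z + 1)) ?addr0; last by lia.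
rewrite -exprD; congr (_ ^+ _); lia.
Qed.

Lemma three K (j : int) : G K.+1 j = (1 + q ^+ (4 * K + 2)) * G K j
   + q ^+ (2 * K + 1) * (G K (j - 1) + G K (j + 1)).
Proof.
case: j => m; first exact: threepos.
have -> : Negz m = - (m.+1%:Z) by [].
rewrite (_ : - m.+1%:Z - 1 = - (m.+1%:Z + 1)); last by lia.
rewrite (_ : - m.+1%:Z + 1 = - (m.+1%:Z - 1)); last by lia.
rewrite !G_sym threepos; congr (_ + _ * _); apply: addrC.
Qed.

Definition eps (j : int) : F := (-1) ^+ `|j|%N * (leg3 (j + 1))%:~R.

Lemma eps_val j (o : bool) (c : int) : odd `|j|%N = o -> ((j + 1) %% 3)%Z = c ->
  eps j = (-1) ^+ o * (if c == 1 then 1 else if c == 2 then -1 else 0)%:~R.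
Proof. by move=> ho hc; rewrite /eps /leg3 -signr_odd ho hc. Qed.

Ltac ev x o c := rewrite (@eps_val x o c); [|lia|lia].

Lemma eps_rec j : eps (j + 1) + eps (j - 1) = eps j.
Proof.
have : ((j %% 6 = 0) \/ (j %% 6 = 1) \/ (j %% 6 = 2) \/ (j %% 6 = 3)
   \/ (j %% 6 = 4) \/ (j %% 6 = 5))%Z by lia.
case=> [h|[h|[h|[h|[h|h]]]]].
- ev (j+1) true (2%Z); ev (j-1) true (0%Z); ev j false (1%Z); rewrite /=; ring.
- ev (j+1) false (0%Z); ev (j-1) false (1%Z); ev j true (2%Z); rewrite /=; ring.
- ev (j+1) true (1%Z); ev (j-1) true (2%Z); ev j false (0%Z); rewrite /=; ring.
- ev (j+1) false (2%Z); ev (j-1) false (0%Z); ev j true (1%Z); rewrite /=; ring.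
- ev (j+1) true (0%Z); ev (j-1) true (1%Z); ev j false (2%Z); rewrite /=; ring.
- ev (j+1) false (1%Z); ev (j-1) false (2%Z); ev j true (0%Z); rewrite /=; ring.
Qed.

Definition Zs (W : nat) (g : int -> F) : F := \sum_(k < (2 * W).+1) g (k%:Z - W%:Z).

Lemma Zs_down W g : Zs W (fun j => g (j - 1)) + g W%:Z = Zs W g + g (- W%:Z - 1).
Proof.
rewrite /Zs big_ord_recl big_ord_recr /=.
have -> : \sum_(i < 2 * W) g ((bump 0 i)%:Z - W%:Z - 1) = \sum_(i < 2 * W) g (i%:Z - W%:Z).
  by apply: eq_bigr => k _; f_equal; rewrite /bump /=; lia.
have -> : g (0%:Z - W%:Z - 1) = g (- W%:Z - 1) by f_equal; lia.
have -> : g ((2 * W)%N%:Z - W%:Z) = g W%:Z by f_equal; lia.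
set S := \sum_(i < _) _; clear; ring.
Qed.

Lemma Zs_up W g : Zs W (fun j => g (j + 1)) + g (- W%:Z) = Zs W g + g (W%:Z + 1).
Proof.
rewrite /Zs big_ord_recr [X in _ = X + _]big_ord_recl /=.
have -> : \sum_(i < 2 * W) g ((widen_ord (leqnSn _) i)%:Z - W%:Z + 1) = \sum_(i < 2 * W) g ((bump 0 i)%:Z - W%:Z).
  by apply: eq_bigr => k _; f_equal; rewrite /bump /=; lia.
have -> : g ((2 * W)%N%:Z - W%:Z + 1) = g (W%:Z + 1) by f_equal; lia.
have -> : g (0%:Z - W%:Z) = g (- W%:Z) by f_equal; lia.
set S := \sum_(i < _) _; clear; ring.
Qed.

Lemma Zs_ext W f g : (forall j, f j = g j) -> Zs W f = Zs W g.
Proof. by move=> h; apply: eq_bigr => k _; apply: h. Qed.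

Lemma Zs_add W f g : Zs W (fun j => f j + g j) = Zs W f + Zs W g.
Proof. by rewrite /Zs big_split. Qed.

Lemma Zs_scale W c f : Zs W (fun j => c * f j) = c * Zs W f.
Proof. by rewrite /Zs mulr_sumr. Qed.

Definition cfun K := qpoch (q ^+ 3) (q ^+ 6) K / qpoch q (q ^+ 2) K.

Lemma qpochS (a t : F) n : qpoch a t n.+1 = qpoch a t n * (1 - a * t ^+ n).
Proof. by rewrite /qpoch big_ord_recr. Qed.

Lemma qpoch_neq0 n : qpoch q (q ^+ 2) n != 0.
Proof.
elim: n => [|n IH]; first by rewrite /qpoch big_ord0 oner_neq0.
rewrite qpochS mulf_neq0 // (_ : q * (q ^+ 2) ^+ n = q ^+ (2 * n).+1); last by rewrite -exprM -exprS.
by apply: q_neq1.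
Qed.

Lemma cS K : cfun K.+1 = cfun K * (1 + q ^+ (2 * K + 1) + q ^+ (4 * K + 2)).
Proof.
rewrite /cfun !qpochS.
have h1 : q ^+ 3 * (q ^+ 6) ^+ K = (q ^+ (2 * K + 1)) ^+ 3 by pw.
have h2 : q * (q ^+ 2) ^+ K = q ^+ (2 * K + 1) by rewrite -exprM -exprS; congr (_ ^+ _); lia.
have h3 : q ^+ (4 * K + 2) = (q ^+ (2 * K + 1)) ^+ 2 by pw.
rewrite h1 h2 h3.
have hx : 1 - q ^+ (2 * K + 1) != 0 by apply: q_neq1; lia.
have hB := qpoch_neq0 K.
move: hx hB; set x := q ^+ _; set B := qpoch q _ K; set A := qpoch _ _ K.
move=> hx hB; field.
by rewrite hB hx.
Qed.

Lemma eps0 : eps 0 = 1.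
Proof. by rewrite /eps /leg3 /=; rewrite expr0 mul1r. Qed.

Lemma G00 : G 0 0 = 1.
Proof. by have := G_diag 0; rewrite expr0; apply. Qed.

Lemma baseC W K : (K <= W)%N -> Zs W (fun j => eps j * G K j) = cfun K.
Proof.
elim: K => [|K IH] hK.
  have hW : (W < (2 * W).+1)%N by lia.
  rewrite /Zs (bigD1 (Ordinal hW)) //= big1 ?addr0.
    by rewrite subrr eps0 G00 mul1r /cfun /qpoch !big_ord0 divr1.
  move=> i hi; rewrite G0 ?mulr0 //.
  have : (i : nat) != W by apply: contra hi => /eqP hi; apply/eqP/val_inj.
  lia.
have hKW : (K < W)%N by lia.
have e1 : Zs W (fun j => eps j * G K.+1 j) = (1 + q ^+ (4 * K + 2)) * Zs W (fun j => eps j * G K j)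
   + q ^+ (2 * K + 1) * (Zs W (fun j => eps j * G K (j - 1)) + Zs W (fun j => eps j * G K (j + 1))).
  rewrite -!Zs_scale -!Zs_add -Zs_scale -Zs_add; apply: Zs_ext => j.
  by rewrite three; clear; ring.
have e2 : Zs W (fun j => eps j * G K (j - 1)) = Zs W (fun j => eps (j + 1) * G K j).
  have := Zs_down W (fun j => eps (j + 1) * G K j).
  rewrite !G0 ?mulr0 ?addr0; try lia.
  by move=> <-; apply: Zs_ext => j; rewrite subrK.
have e3 : Zs W (fun j => eps j * G K (j + 1)) = Zs W (fun j => eps (j - 1) * G K j).
  have := Zs_up W (fun j => eps (j - 1) * G K j).
  rewrite !G0 ?mulr0 ?addr0; try lia.
  by move=> <-; apply: Zs_ext => j; rewrite addrK.
rewrite e1 e2 e3 -Zs_add.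
rewrite (Zs_ext W _ (fun j => eps j * G K j)); last by move=> j; rewrite -mulrDl eps_rec.
by rewrite IH ?cS; [clear; ring | lia].
Qed.

Definition tt (M a k : nat) : F := p ^+ (k ^ 2 + a * k) * r (M - k)%N * r k * r (a + k)%N.

Lemma r0 : r (Posz 0) = 1.
Proof. by rewrite r_nat tpoch0 invr1. Qed.

Lemma CV_step M a k : (k <= M)%N ->
  (1 - p ^+ M.+1) * tt M.+1 a k =
  p ^+ (k ^ 2 + a * k) * r (a + k)%N * r (M.+1 - k)%N * r (k%:Z - 1)
  + tt M a.+1 k
  - p ^+ (k.+1 ^ 2 + a * k.+1) * r (a + k.+1)%N * r (M - k)%N * r k.
Proof.
move=> hk; rewrite /tt.
have [d hd] : exists d, M = (k + d)%N by exists (M - k)%N; lia.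
subst M.
rewrite (_ : (k + d).+1 - k = d.+1)%N; last by lia.
rewrite (_ : (k + d - k = d)%N); last by lia.
rewrite (_ : (a.+1 + k = (a + k).+1)%N); last by lia.
rewrite (_ : (a + k.+1 = (a + k).+1)%N); last by lia.
rewrite rm1 (rshn d) (rshn (a + k)).
have x1 : p ^+ (k ^ 2 + a.+1 * k) = p ^+ (k ^ 2 + a * k) * p ^+ k by pw.
have x2 : p ^+ (k.+1 ^ 2 + a * k.+1) = p ^+ (k ^ 2 + a * k) * (p ^+ k) ^+ 2 * p ^+ a * p by pw.
have x3 : p ^+ (k + d).+1 = p ^+ k * p ^+ d * p by pw.
have x4 : p ^+ d.+1 = p ^+ d * p by pw.
have x5 : p ^+ (a + k).+1 = p ^+ a * p ^+ k * p by pw.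
rewrite x1 x2 x3 x4 x5.
move: (p ^+ (k ^ 2 + a * k)) (p ^+ k) (p ^+ a) (p ^+ d) (r d.+1) (r k) (r (a + k).+1) => P X A D R1 R2 R3.
clear; ring.
Qed.

Lemma CV M a : \sum_(k < M.+1) tt M a k = r M * r (a + M)%N.
Proof.
elim: M a => [|M IH] a.
  rewrite big_ord_recl big_ord0 addr0 /tt (_ : (0 ^ 2 + a * 0 = 0)%N); last by lia.
  by rewrite subnn !r0 expr0 !mul1r.
have hx := p_neq1 M.+1 (ltn0Sn M).
apply: (mulfI hx).
set u := fun k : nat => p ^+ (k ^ 2 + a * k) * r (a + k)%N * r (M.+1 - k)%N * r (k%:Z - 1).
have hu0 : u 0%N = 0.
  by rewrite /u /= (r_neg (Posz 0 - 1)) ?mulr0.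
rewrite mulr_sumr big_ord_recr /=.
rewrite (eq_bigr (fun k : 'I_M.+1 => u k + tt M a.+1 k - u k.+1)); last first.
  move=> k _; rewrite CV_step; last by have := ltn_ord k; lia.
  rewrite /u; congr (_ + _ - _).
  have e : k.+1%:Z - 1 = k by lia.
  by rewrite subSS e.
have hlast : (1 - p ^+ M.+1) * tt M.+1 a M.+1 = u M.+1.
  rewrite /tt /u subnn r0 mulr1 (_ : M.+1%:Z - 1 = M); last by lia.
  by rewrite (rshn M); clear; ring.
have hs1 : \sum_(i < M.+2) u i = \sum_(i < M.+1) u i + u M.+1 by rewrite big_ord_recr.
have hs2 : \sum_(i < M.+2) u i = u 0%N + \sum_(i < M.+1) u i.+1 by rewrite big_ord_recl.
rewrite hlast sumrB big_split /= IH (_ : (a.+1 + M = a + M.+1)%N); last by lia.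
rewrite hu0 add0r in hs2.
move: hs1 hs2 => -> <-.
rewrite (rshn M).
move: (\sum_(i < M.+1) u i) (u M.+1) => S U.
clear; ring.
Qed.

Lemma claimD_pos L (m : nat) :
  \sum_(K < L.+1) p ^+ (K ^ 2) * r (L%:Z - K%:Z) * (r (K%:Z - m%:Z) * r (K%:Z + m%:Z))
  = p ^+ (m ^ 2) * (r (L%:Z - m%:Z) * r (L%:Z + m%:Z)).
Proof.
case: (ltnP L m) => hm.
  rewrite [r (L%:Z - m%:Z)]r_neg ?mul0r ?mulr0; last by lia.
  apply: big1 => K _; rewrite [r (K%:Z - m%:Z)]r_neg ?mul0r ?mulr0 //.
  have := ltn_ord K; lia.
pose f := fun K : nat => p ^+ (K ^ 2) * r (L%:Z - K%:Z) * (r (K%:Z - m%:Z) * r (K%:Z + m%:Z)).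
rewrite -(big_mkord xpredT f).
have hmL : (m <= L.+1)%N by lia.
rewrite (big_cat_nat (leq0n m) hmL) /=.
rewrite big1_seq ?add0r; last first.
  move=> K; rewrite mem_index_iota => /andP [_ hK].
  by rewrite /f [r (K%:Z - m%:Z)]r_neg ?mul0r ?mulr0 //; lia.
rewrite (_ : \sum_(m <= i < L.+1) f i = \sum_(0 + m <= i < L.+1) f i) // big_addn.
have [M hM] : exists M, L = (m + M)%N by exists (L - m)%N; lia.
rewrite (_ : (L.+1 - m = M.+1)%N); last by lia.
rewrite big_mkord.
rewrite (eq_bigr (fun k : 'I_M.+1 => p ^+ (m ^ 2) * tt M (2 * m) k)); last first.
  move=> k _; rewrite /f /tt.
  have hk := ltn_ord k.
  rewrite (_ : L%:Z - (k + m)%N%:Z = (M - k)%N); last by lia.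
  rewrite (_ : (k + m)%N%:Z - m%:Z = k); last by lia.
  rewrite (_ : (k + m)%N%:Z + m%:Z = (2 * m + k)%N); last by lia.
  have -> : p ^+ ((k + m) ^ 2) = p ^+ (m ^ 2) * p ^+ (k ^ 2 + 2 * m * k) by pw.
  by rewrite -!mulrA.
rewrite -mulr_sumr CV.
rewrite (_ : L%:Z - m%:Z = M); last by lia.
by rewrite (_ : L%:Z + m%:Z = (2 * m + M)%N); last by lia.
Qed.

Lemma claimD L (j : int) :
  \sum_(K < L.+1) p ^+ (K ^ 2) * r (L%:Z - K%:Z) * (r (K%:Z - j) * r (K%:Z + j))
  = p ^+ (`|j| ^ 2) * (r (L%:Z - j) * r (L%:Z + j)).
Proof.
case: (lerP 0 j) => hj.
  have [m ->] : exists m : nat, j = m by exists `|j|%N; lia.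
  exact: claimD_pos.
have [m hm] : exists m : nat, j = - m%:Z by exists `|j|%N; lia.
subst j.
rewrite abszN absz_nat (_ : L%:Z - - m%:Z = L%:Z + m%:Z); last by lia.
rewrite [r (L%:Z + _) * _]mulrC -claimD_pos.
apply: eq_bigr => K _; rewrite (_ : K%:Z - - m%:Z = K%:Z + m%:Z); last by lia.
congr (_ * _); apply: mulrC.
Qed.

Fixpoint beta (v L : nat) : F :=
  match v with
  | 0 => cfun L * r (2 * L)%N
  | v'.+1 => \sum_(K < L.+1) p ^+ (K ^ 2) * r (L%:Z - K%:Z) * beta v' K
  end.

Definition alpha (v : nat) (j : int) : F := eps j * q ^+ (`|j| ^ 2) * p ^+ (v * `|j| ^ 2).

Lemma claimA v W K : (K <= W)%N ->
  beta v K = Zs W (fun j => alpha v j * (r (K%:Z - j) * r (K%:Z + j))).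
Proof.
elim: v K => [|v IH] K hK /=.
  rewrite -(baseC W K hK) /Zs mulr_suml; apply: eq_bigr => k _.
  rewrite /alpha /G mul0n expr0 mulr1.
  set T := tpoch p _; set R := r (Posz (2 * K)).
  have hTR : T * R = 1 by rewrite /T /R r_nat mulfV // tpoch_neq0.
  clearbody T R.
  rewrite -[RHS]mulr1 -hTR.
  move: (eps _) (q ^+ _) (r _) (r _) => a b c d; clear; ring.
rewrite /Zs.
rewrite (eq_bigr (fun K' : 'I_K.+1 => \sum_(k < (2 * W).+1) p ^+ (K' ^ 2) * r (K%:Z - K'%:Z) *
   (alpha v (k%:Z - W%:Z) * (r (K'%:Z - (k%:Z - W%:Z)) * r (K'%:Z + (k%:Z - W%:Z)))))); last first.
  move=> K' _; rewrite (IH K'); last by have := ltn_ord K'; lia.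
  by rewrite /Zs mulr_sumr.
rewrite exchange_big /=; apply: eq_bigr => k _.
rewrite (eq_bigr (fun K' : 'I_K.+1 => alpha v (k%:Z - W%:Z) * (p ^+ (K' ^ 2) * r (K%:Z - K'%:Z) *
   (r (K'%:Z - (k%:Z - W%:Z)) * r (K'%:Z + (k%:Z - W%:Z)))))); last by move=> K' _; clear; ring.
rewrite -mulr_sumr claimD /alpha.
rewrite (_ : p ^+ (v.+1 * _) = p ^+ (v * `|k%:Z - W%:Z| ^ 2) * p ^+ (`|k%:Z - W%:Z| ^ 2)); last by pw.
clear; ring.
Qed.

Lemma qbinom_r (A : nat) (Bz : int) :
  qbinom p A%:Z Bz = tpoch p A * (r Bz * r (A%:Z - Bz)).
Proof.
rewrite /qbinom.
case: ifP => h.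
  have [b hb] : exists b : nat, Bz = b by exists `|Bz|%N; lia.
  subst Bz.
  have [c hc] : exists c : nat, A%:Z - b%:Z = c by exists (A - b)%N; lia.
  by rewrite hc !r_nat /= invfM.
case: (ltrP Bz 0) => h1.
  by rewrite (r_neg Bz h1) mul0r mulr0.
rewrite [r (A%:Z - Bz)]r_neg ?mulr0 //.
lia.
Qed.

Lemma rhs_eq v L B : (L <= B)%N ->
  \sum_(k < (2 * B).+1) rhs_term q v L (k%:Z - B%:Z) = tpoch p (2 * L) * beta v L.
Proof.
move=> h; rewrite (claimA v B L h) /Zs mulr_sumr; apply: eq_bigr => k _.
rewrite /rhs_term qbinom_r /alpha /eps.
rewrite (_ : (2 * L)%N%:Z - (L%:Z + (k%:Z - B%:Z)) = L%:Z - (k%:Z - B%:Z)); last by lia.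
rewrite (_ : q ^+ ((2 * v + 1) * _) = q ^+ (`|k%:Z - B%:Z| ^ 2) * p ^+ (v * `|k%:Z - B%:Z| ^ 2)); last by pw.
move: ((-1) ^+ _) ((leg3 _)%:~R) (q ^+ _) (p ^+ _) (r _) (r _) (tpoch _ _) => a b c d e f g.
clear; ring.
Qed.

Definition cons (x : nat) (g : nat -> nat) : nat -> nat :=
  fun i => if i is i'.+1 then g i' else x.

Lemma ext_h w B (x : 'I_B) (t : {ffun 'I_w -> 'I_B}) :
  ext_fam [ffun i : 'I_w.+1 => if unlift ord0 i is Some i' then t i' else x]
  = cons x (ext_fam t).
Proof.
apply: functional_extensionality => i.
rewrite /ext_fam /cons.
case: i => [|i].
  case: insubP => [k _ ek|]; last by [].
  have -> : k = ord0 by apply: val_inj.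
  by rewrite ffunE unlift_none.
case: insubP => [k hk ek|hk]; case: insubP => [k' hk' ek'|hk'] //=.
- rewrite ffunE; case: unliftP => [j ej|ej].
    by congr (nat_of_ord (t _)); apply: val_inj; rewrite ek'; move: (congr1 val ej); rewrite ek /= /bump /=; lia.
  by move: (congr1 val ej); rewrite ek.
- by rewrite ltnS in hk; rewrite hk in hk'.
- by rewrite ltnS hk' in hk.
Qed.

Lemma ffun_split w B (Phi : (nat -> nat) -> F) :
  \sum_(n : {ffun 'I_w.+1 -> 'I_B}) Phi (ext_fam n)
  = \sum_(x < B) \sum_(t : {ffun 'I_w -> 'I_B}) Phi (cons x (ext_fam t)).
Proof.
rewrite pair_bigA /=.
pose h := fun xt : 'I_B * {ffun 'I_w -> 'I_B} =>
  ([ffun i : 'I_w.+1 => if unlift ord0 i is Some i' then xt.2 i' else xt.1] : {ffun 'I_w.+1 -> 'I_B}).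
pose h' := fun f : {ffun 'I_w.+1 -> 'I_B} =>
  (f ord0, ([ffun i : 'I_w => f (lift ord0 i)] : {ffun 'I_w -> 'I_B})).
rewrite (reindex h) /=; last first.
  apply: onW_bij; exists h'.
    case=> x t; rewrite /h /h' /= ffunE unlift_none; congr (_, _).
    by apply/ffunP => i; rewrite !ffunE liftK.
  move=> f; apply/ffunP => i; rewrite /h /h' ffunE /=.
  case: unliftP => [j ->|->]; by rewrite ?ffunE.
apply: eq_bigr => [[x t]] _.
by rewrite /h /= ext_h.
Qed.

Definition T (v : nat) (f : nat -> nat) : F :=
  let qt := q ^+ 2 in
  let nv := f v.-1 in
  qt ^+ (\sum_(i < v) (Nsum v f i) ^ 2)%N
  / ((\prod_(i < v | (i < v.-1)%N) tpoch qt (f i)) * tpoch qt (2 * nv)%N)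
  * (qpoch (q ^+ 3) (q ^+ 6) nv / qpoch q (q ^+ 2) nv).

Lemma lhs_T v L f : lhs_term q v L f = T v f * (tpoch p (2 * L) * r (L%:Z - (Nsum v f 0)%:Z)).
Proof. by []. Qed.

Lemma Nsum_cons w x g i :
  Nsum w.+1 (cons x g) i = ((if i == 0%N then x else 0) + Nsum w g i.-1)%N.
Proof.
rewrite /Nsum !big_mkcond big_ord_recl /=; congr addn.
  by case: i.
rewrite [RHS]big_mkcond; apply: eq_bigr => k _; rewrite /bump /= ?add0n.
by case: i.
Qed.

Lemma T_cons w x g : T w.+2 (cons x g) = p ^+ ((x + Nsum w.+1 g 0) ^ 2) * (tpoch p x)^-1 * T w.+1 g.
Proof.
rewrite /T /=.
rewrite big_ord_recl Nsum_cons /=.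
rewrite (eq_bigr (fun i : 'I_w.+1 => (Nsum w.+1 g i) ^ 2)%N); last first.
  by move=> i _; rewrite Nsum_cons /bump /= ?add1n ?add0n.
rewrite [\prod_(i < w.+2 | _) _]big_mkcond [\prod_(i < w.+2) _]big_ord_recl /=.
rewrite (eq_bigr (fun i : 'I_w.+1 => if (i < w)%N then tpoch p (g i) else 1)); last first.
  by move=> i _; rewrite /bump /= ?add1n ?add0n.
rewrite -big_mkcond /= exprD !invfM.
move: (p ^+ _) (p ^+ _) (tpoch _ _) (\prod_(_ < _ | _) _) (tpoch _ _) (qpoch _ _ _) (qpoch _ _ _).
move=> a b c d e f g0; clear; ring.
Qed.

Lemma T1_cons x g : T 1 (cons x g) = p ^+ (x ^ 2) * (cfun x * r (2 * x)%N).
Proof.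
rewrite /T /= big_ord1 Nsum_cons /= /Nsum big_ord0 addn0 big_pred0 // mul1r r_nat /cfun.
move: (p ^+ _) (tpoch _ _) (qpoch _ _ _) (qpoch _ _ _) => a b c d; clear; ring.
Qed.

Lemma sum_trunc n m (f : nat -> F) : (m <= n)%N -> (forall x, (m <= x)%N -> f x = 0) ->
  \sum_(x < n) f x = \sum_(x < m) f x.
Proof.
move=> hmn hf.
have [d ->] : exists d, n = (m + d)%N by exists (n - m)%N; lia.
rewrite big_split_ord /= [X in _ + X = _]big1 ?addr0 //.
by move=> i _; apply: hf; rewrite /=; lia.
Qed.

Lemma inner B L M (phi : nat -> F) : (L < B)%N ->
  \sum_(x < B) p ^+ ((x + M) ^ 2) * phi x * r (L%:Z - (x + M)%N%:Z)
  = \sum_(K < L.+1) p ^+ (K ^ 2) * r (L%:Z - K%:Z) * (if (M <= K)%N then phi (K - M)%N else 0).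
Proof.
move=> hLB.
case: (ltnP L M) => hLM.
  rewrite big1 ?[RHS]big1 //.
    move=> K _; rewrite ifF ?mulr0 //; have := ltn_ord K; lia.
  by move=> x _; rewrite r_neg ?mulr0 //; lia.
have [D hD] : exists D, L = (M + D)%N by exists (L - M)%N; lia.
rewrite (sum_trunc B D.+1 (fun x => p ^+ ((x + M) ^ 2) * phi x * r (L%:Z - (x + M)%N%:Z))); last 2 first.
- lia.
- by move=> x hx; rewrite r_neg ?mulr0 //; lia.
rewrite hD -addnS big_split_ord /= [X in _ = X + _]big1 ?add0r; last first.
  by move=> i _; rewrite ifF ?mulr0 //; have := ltn_ord i; lia.
apply: eq_bigr => i _; rewrite /= ifT; last by lia.
rewrite (_ : (M + i - M = i)%N); last by lia.
rewrite (_ : (i + M = M + i)%N); last by lia.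
by rewrite mulrAC.
Qed.

Lemma r_if N K : (if (N <= K)%N then (tpoch p (K - N))^-1 else 0) = r (K%:Z - N%:Z).
Proof.
case: ifP => h.
  by rewrite (_ : K%:Z - N%:Z = (K - N)%N) ?r_nat //; lia.
by rewrite r_neg //; lia.
Qed.

Lemma claimP w B L : (L < B)%N ->
  \sum_(n : {ffun 'I_w.+1 -> 'I_B}) T w.+1 (ext_fam n) * r (L%:Z - (Nsum w.+1 (ext_fam n) 0)%:Z)
  = beta w.+1 L.
Proof.
elim: w L => [|w IH] L hLB.
  rewrite (ffun_split 0 B (fun f => T 1 f * r (L%:Z - (Nsum 1 f 0)%:Z))) /=.
  rewrite (eq_bigr (fun x : 'I_B => p ^+ ((x + 0) ^ 2) * (cfun x * r (2 * x)%N) * r (L%:Z - (x + 0)%N%:Z))); last first.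
    move=> x _.
    rewrite (eq_bigr (fun _ => p ^+ ((x + 0) ^ 2) * (cfun x * r (2 * x)%N) * r (L%:Z - (x + 0)%N%:Z))); last first.
      by move=> t _; rewrite T1_cons Nsum_cons /= /Nsum big_ord0 !addn0.
    by rewrite sumr_const card_ffun !card_ord expn0 mulr1n.
  rewrite (inner B L 0 (fun x => cfun x * r (2 * x)%N) hLB).
  by apply: eq_bigr => K _; rewrite subn0.
rewrite (ffun_split w.+1 B (fun f => T w.+2 f * r (L%:Z - (Nsum w.+2 f 0)%:Z))) /=.
rewrite (eq_bigr (fun x : 'I_B => \sum_(t : {ffun 'I_w.+1 -> 'I_B})
   T w.+1 (ext_fam t) * (p ^+ ((x + Nsum w.+1 (ext_fam t) 0) ^ 2) * (tpoch p x)^-1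
     * r (L%:Z - (x + Nsum w.+1 (ext_fam t) 0)%N%:Z)))); last first.
  move=> x _; apply: eq_bigr => t _.
  rewrite T_cons Nsum_cons /=.
  by move: (p ^+ _) (_^-1) (T _ _) (r _) => a b c d; clear; ring.
rewrite exchange_big /=.
rewrite (eq_bigr (fun t : {ffun 'I_w.+1 -> 'I_B} => \sum_(K < L.+1)
   p ^+ (K ^ 2) * r (L%:Z - K%:Z) * (T w.+1 (ext_fam t) * r (K%:Z - (Nsum w.+1 (ext_fam t) 0)%:Z)))); last first.
  move=> t _; rewrite -mulr_sumr (inner B L _ (fun x => (tpoch p x)^-1) hLB) mulr_sumr.
  by apply: eq_bigr => K _; rewrite r_if; move: (p ^+ _) (T _ _) (r _) (r _) => a b c d; clear; ring.
rewrite exchange_big /=; apply: eq_bigr => K _.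
rewrite -mulr_sumr IH //.
have := ltn_ord K; lia.
Qed.

End Main.

Theorem mainTheorem13 (F : fieldType) (q : F)
    (hq : forall k : nat, (0 < k)%N -> q ^+ k != 1)
    (v L B : nat) (hv : (1 <= v)%N) (hB : (L < B)%N) :
  \sum_(n : {ffun 'I_v -> 'I_B}) lhs_term q v L (ext_fam n)
  = \sum_(k < (2 * B).+1) rhs_term q v L (k%:Z - B%:Z).
Proof.
case: v hv => [//|w] _.
rewrite (rhs_eq F q hq w.+1 L B (ltnW hB)) -(claimP F q w B L hB) mulr_sumr.
apply: eq_bigr => n _.
by rewrite lhs_T mulrCA.
Qed.
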